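(* Given a nondeterministic planning domain $D$, one can build a deterministic Rabin word automaton $M_{D,unfair}$ over the alphabet $2^{\mathcal{F}\cup\mathcal{A}}$ that accepts exactly the infinite traces of $D$ that are not state-action fair. Moreover, $M_{D,unfair}$ has size and index at most exponential in the size of (the compact representation of) $D$.
   Context: A nondeterministic planning domain is $D=(St,Act,s_0,Tr)$ with $St=2^{\mathcal{F}}$, $Act=2^{\mathcal{A}}$, initial state $s_0$, and $Tr\subseteq St\times Act\times St$, compactly represented by a description over the Boolean variables $\mathcal{F}$ and $\mathcal{A}$. An (infinite) trace of $D$ is a sequence $(s_0\cup a_0)(s_1\cup a_1)\cdots$ over $2^{\mathcal{F}\cup\mathcal{A}}$ with $(s_{i-1},a_{i-1},s_i)\in Tr$. It is state-action fair if for every $(s,a,s')\in Tr$, if $s,a$ occurs infinitely often then $s,a$ immediately followed by $s'$ occurs infinitely often. A Rabin condition over a set $X$ is a set $\mathcal{R}$ of pairs $(I,F)$ with $I,F\subseteq X$; an infinite sequence over $X$ satisfies it if for some pair $(I,F)$ some element of $I$ occurs infinitely often and no element of $F$ occurs infinitely often. A deterministic Rabin word automaton (DRW) is $(\Sigma,Q,q_0,\delta,\mathcal{R})$ with finite $Q$, $\delta:Q\times\Sigma\to Q$, and $\mathcal{R}$ a Rabin condition over $Q$; it accepts an infinite word iff its unique run satisfies $\mathcal{R}$. Its size is $|Q|$ and its index is $|\mathcal{R}|$. *)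

(* Defs.v *)
From mathcomp Require Import all_boot.
Set Implicit Arguments. Unset Strict Implicit. Unset Printing Implicit Defensive.

Record domain (F A : finType) := Domain {
  init : {set F};
  trans : {set F} -> {set A} -> {set F} -> bool
}.

(* Letters of the alphabet 2^(F ∪ A); F and A are disjoint, encoded as F + A. *)
Definition letter (F A : finType) := {set (F + A)%type}.

Definition mkletter (F A : finType) (s : {set F}) (a : {set A}) : letter F A :=
  (@inl F A @: s) :|: (@inr F A @: a).

Definition inf_often (P : nat -> Prop) : Prop := forall N, exists n, N <= n /\ P n.

Definition is_trace (F A : finType) (D : domain F A) (w : nat -> letter F A) : Prop :=
  exists (s : nat -> {set F}) (a : nat -> {set A}),
    s 0 = init D /\
    (forall i, w i = mkletter (s i) (a i)) /\
    (forall i, trans D (s i) (a i) (s i.+1)).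

Definition sa_fair (F A : finType) (D : domain F A) (w : nat -> letter F A) : Prop :=
  forall s a s', trans D s a s' ->
    inf_often (fun i => w i = mkletter s a) ->
    inf_often (fun i => w i = mkletter s a /\
                        [set f | inl f \in w i.+1] = s').

Record DRW (Sigma : Type) := MkDRW {
  Q : finType;
  q0 : Q;
  delta : Q -> Sigma -> Q;
  rabin : {set ({set Q} * {set Q})}
}.

Fixpoint run (Sigma : Type) (M : DRW Sigma) (w : nat -> Sigma) (n : nat) : Q M :=
  match n with
  | 0 => q0 M
  | n'.+1 => delta (run M w n') (w n')
  end.

Definition accepts (Sigma : Type) (M : DRW Sigma) (w : nat -> Sigma) : Prop :=
  exists p, p \in rabin M /\
    (exists q, q \in p.1 /\ inf_often (fun n => run M w n = q)) /\
    (forall q, q \in p.2 -> ~ inf_often (fun n => run M w n = q)).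

Definition drw_size (Sigma : Type) (M : DRW Sigma) : nat := #|Q M|.
Definition drw_index (Sigma : Type) (M : DRW Sigma) : nat := #|rabin M|.

(* Main.v *)
Require Import Defs.
From mathcomp Require Import all_boot.
From Stdlib Require Import Classical.
From mathcomp Require Import zify.
Set Implicit Arguments. Unset Strict Implicit.

Lemma card_setT (T : finType) : #|{: {set T}}| = 2 ^ #|T|.
Proof.
have -> : #|T| = #|[set: T]| by rewrite cardsT.
rewrite -card_powerset; apply: eq_card => X.
by rewrite !inE subsetT.
Qed.

Definition stF (F A : finType) (L : letter F A) : {set F} := [set f : F | (inl f : (F + A)%type) \in (L : {set (F + A)%type})].
Definition stA (F A : finType) (L : letter F A) : {set A} := [set x : A | (inr x : (F + A)%type) \in (L : {set (F + A)%type})].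

Lemma inl_inr (F A : finType) (f : F) (S : {set A}) :
  (@inl F A f \in [set inr x | x in S]) = false.
Proof. by apply/imsetP => -[y _]. Qed.
Lemma inr_inl (F A : finType) (x : A) (S : {set F}) :
  (@inr F A x \in [set inl y | y in S]) = false.
Proof. by apply/imsetP => -[y _]. Qed.

Lemma decomp (F A : finType) (L : letter F A) : L = mkletter (stF L) (stA L).
Proof.
apply/setP => -[f|x]; rewrite /mkletter !inE.
  by rewrite mem_imset; [rewrite inl_inr inE orbF | move=> ? ? []].
by rewrite inr_inl mem_imset; [rewrite inE | move=> ? ? []].
Qed.

Lemma stF_mk (F A : finType) s a : stF (@mkletter F A s a) = s.
Proof.
apply/setP => f; rewrite /stF /mkletter !inE.
by rewrite mem_imset; [rewrite inl_inr orbF | move=> ? ? []].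
Qed.
Lemma stA_mk (F A : finType) s a : stA (@mkletter F A s a) = a.
Proof.
apply/setP => f; rewrite /stA /mkletter !inE.
by rewrite inr_inl mem_imset //; move=> ? ? [].
Qed.

Definition Qt (F A : finType) : finType :=
  option (option (letter F A) * option (letter F A)).

Definition okb F A (D : domain F A) (c : option (letter F A)) (L : letter F A) : bool :=
  match c with None => stF L == init D | Some C => trans D (stF C) (stA C) (stF L) end.

Definition dlt F A (D : domain F A) (q : Qt F A) (L : letter F A) : Qt F A :=
  match q with
  | None => None
  | Some (p, c) => if okb D c L then Some (c, Some L) else None
  end.

Definition inI F A (t : {set F} * {set A} * {set F}) (q : Qt F A) : bool :=
  match q with Some (_, Some C) => C == mkletter t.1.1 t.1.2 | _ => false end.
Definition inFs F A (t : {set F} * {set A} * {set F}) (q : Qt F A) : bool :=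
  match q with
  | Some (Some P, Some C) => (P == mkletter t.1.1 t.1.2) && (stF C == t.2)
  | _ => false end.

Definition Mun F A (D : domain F A) : DRW (letter F A) :=
  @MkDRW _ (Qt F A) (Some (None, None)) (@dlt F A D)
    [set ([set q | inI t q], [set q | inFs t q]) | t in [set t | trans D t.1.1 t.1.2 t.2]].

Lemma pigeon (T : finType) (f : nat -> T) (P : T -> Prop) :
  inf_often (fun n => P (f n)) -> exists x, P x /\ inf_often (fun n => f n = x).
Proof.
move=> H; apply: NNPP => Hn.
have Hx : forall x, exists N, forall n, N <= n -> ~ (P x /\ f n = x).
  move=> x; apply: NNPP => Hc; apply: Hn; exists x; split.
    by apply: NNPP => Px; apply: Hc; exists 0 => n _ [].
  move=> N; apply: NNPP => Hm; apply: Hc; exists N => n Hn' [_ E]; apply: Hm.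
  by exists n.
have: forall l : seq T, exists N, forall x, x \in l -> forall n, N <= n -> ~ (P x /\ f n = x).
  elim=> [|y l [N HN]]; first by exists 0.
  have [M HM] := Hx y; exists (maxn N M) => x; rewrite inE => /orP [/eqP -> | xl] n Hle.
    by apply: HM; apply: leq_trans (leq_maxr N M) Hle.
  by apply: (HN x xl n); apply: leq_trans (leq_maxl _ _) Hle.
move/(_ (enum T)) => [N HN]; have [n [Hle Pn]] := H N.
by apply: (HN (f n) _ n Hle); rewrite ?mem_enum.
Qed.

Lemma run_sink F A (D : domain F A) w n m :
  run (Mun D) w n = None -> n <= m -> run (Mun D) w m = None.
Proof.
move=> Hn; elim: m => [|m IH]; first by rewrite leqn0 => /eqP <-.
rewrite leq_eqVlt => /orP [/eqP <- // | Hlt].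
by rewrite /= IH.
Qed.

Lemma run_shape F A (D : domain F A) w n : run (Mun D) w n <> None ->
  run (Mun D) w n = Some ((if n is n'.+2 then Some (w n') else None),
                          (if n is n'.+1 then Some (w n') else None)).
Proof.
elim: n => [//|n IH] H.
have Hn : run (Mun D) w n <> None.
  by move=> E; apply: H; rewrite /= E.
move: H; rewrite /= IH //= => H.
move: H; case: ifP => // _ _; by case: n {IH Hn}.
Qed.

Lemma run_ok F A (D : domain F A) w n : run (Mun D) w n.+1 <> None ->
  okb D (if n is n'.+1 then Some (w n') else None) (w n).
Proof.
move=> H.
have Hn : run (Mun D) w n <> None.
  by move=> E; apply: H; rewrite /= E.
move: H; rewrite /= run_shape //=; by case: ifP.
Qed.

Lemma trace_run F A (D : domain F A) w : is_trace D w -> forall n, run (Mun D) w n <> None.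
Proof.
move=> [s [a [H0 [Hw Ht]]]].
elim=> [//|n IH]; rewrite /= run_shape //=.
have -> : okb D (if n is n'.+1 then Some (w n') else None) (w n) = true; last by [].
case: n IH => [|n] _ /=; first by rewrite Hw stF_mk H0 eqxx.
by rewrite !Hw !stF_mk stA_mk; apply: Ht.
Qed.

Theorem lemma1 :
  exists c : nat, forall (F A : finType) (D : domain F A),
    exists M : DRW (letter F A),
      (forall w : nat -> letter F A, accepts M w <-> (is_trace D w /\ ~ sa_fair D w)) /\
      drw_size M <= 2 ^ (c * (#|F| + #|A| + 1)) /\
      drw_index M <= 2 ^ (c * (#|F| + #|A| + 1)).
Proof.
exists 3 => F A D; exists (Mun D); split; [|split].
- move=> w; split.
  + case=> p [/imsetP [t]]; rewrite inE => Ht -> /= [[q [qI Hq]] HF].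
    have NN : forall n, run (Mun D) w n <> None.
      move=> n En; have [m [Hm Em]] := Hq n.
      by move: qI; rewrite inE -Em (run_sink En Hm).
    split.
      exists (fun i => stF (w i)), (fun i => stA (w i)); split; [|split].
      * by have := run_ok (NN 1); move/eqP.
      * by move=> i; apply: decomp.
      * by move=> i; have := run_ok (NN i.+2).
    move=> Hfair.
    have Hinf1 : inf_often (fun i => w i = mkletter t.1.1 t.1.2).
      move=> N; have [m [Hm Em]] := Hq N.+1.
      case: m Hm Em => [//|m] Hm Em; exists m; split => //.
      move: qI; rewrite inE -Em (run_shape (NN _)) /=; by move/eqP.
    have Hinf := Hfair t.1.1 t.1.2 t.2 Ht Hinf1.
    have [q' [q'F Hq']] : exists q', q' \in [set q | inFs t q] /\
        inf_often (fun n => run (Mun D) w n = q').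
      apply: (pigeon (f := run (Mun D) w) (P := fun q => q \in [set q | inFs t q])).
      move=> N; have [i [Hi [E1 E2]]] := Hinf N; exists i.+2; split.
        lia.
      by rewrite (run_shape (NN _)) /= inE /= E1 eqxx /=; apply/eqP; exact: E2.
    exact: HF q' q'F Hq'.
  + move=> [Htr Hnf].
    have NN := trace_run Htr.
    have [s [a [s' [Hts [Hinf Hninf]]]]] : exists s a s', trans D s a s' /\
        inf_often (fun i => w i = mkletter s a) /\
        ~ inf_often (fun i => w i = mkletter s a /\ [set f | inl f \in w i.+1] = s').
      apply: NNPP => H; apply: Hnf => s a s' Ht Hi; apply: NNPP => Hn; apply: H.
      by exists s, a, s'.
    exists ([set q | inI (s, a, s') q], [set q | inFs (s, a, s') q]); split.
      by apply/imsetP; exists (s, a, s'); rewrite ?inE.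
    split.
      apply: (pigeon (f := run (Mun D) w) (P := fun q => q \in [set q | inI (s, a, s') q])).
      move=> N; have [i [Hi E]] := Hinf N; exists i.+1; split; first lia.
      by rewrite (run_shape (NN _)) /= inE /= E eqxx.
    move=> q /=; rewrite inE => qF Hq; apply: Hninf => N.
    have [n [Hn Eq]] := Hq N.+2.
    case: n Hn Eq => [|[|i]] // Hn Eq; exists i; split => //.
    move: qF; rewrite -Eq (run_shape (NN _)) /= => /andP [/eqP E1 /eqP E2]; by [].
- rewrite /drw_size /= card_option card_prod !card_option card_setT card_sum.
  have : 1 <= 2 ^ (#|F| + #|A|) by rewrite expn_gt0.
  have -> : 3 * (#|F| + #|A| + 1) = (#|F| + #|A|) * 3 + 3 by lia.
  rewrite (expnD 2 ((#|F| + #|A|) * 3) 3) expnM.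
  move: (2 ^ (#|F| + #|A|)) => m Hm; nia.
- rewrite /drw_index /=; apply: leq_trans (leq_imset_card _ _) _.
  apply: leq_trans (max_card _) _.
  rewrite !card_prod !card_setT -!expnD.
  apply: leq_pexp2l => //; have ar : forall a b : nat, a + b + a <= 3 * (a + b + 1) by move=> a b; lia.
  exact: ar.
Qed.
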